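(* Let $\mathcal{U}$ be any perturbation set, $c:\mathcal{X}\to\mathcal{Y}$ a concept, $D$ a distribution on $\mathcal{X}$, $\beta\in(0,1]$, $\epsilon'\ge0$, and $h_1,\dots,h_T:\mathcal{X}\to\mathcal{Y}$ classifiers. Write $R_t=\mathrm{Rob}_{\mathcal{U}^{-1}(\mathcal{U})}(h_t)$ and $\bar R_{1:t}=\bigcap_{s\le t}(\mathcal{X}\setminus R_s)$ (with $\bar R_{1:0}=\mathcal{X}$). Suppose that for every $1\le t\le T$ with $\Pr_{x\sim D}[\bar R_{1:t-1}]>0$, $$\Pr_{x\sim D}[x\in R_t\mid x\in\bar R_{1:t-1}]\ge\beta\quad\text{and}\quad\Pr_{x\sim D}[h_t(x)\neq c(x)\mid x\in\bar R_{1:t-1}]\le\epsilon'.$$ Then $\Pr_{x\sim D}[\bar R_{1:t}]\le(1-\beta)^t$ for all $t\le T$, and $$\Pr_{x\sim D}\big[\exists z\in\mathcal{U}(x):\ \mathrm{CAS}(h_1,\dots,h_T)(z)\neq c(x)\big]\le\frac{\epsilon'}{\beta}+(1-\beta)^T.$$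
   Context: A perturbation set is a map $\mathcal{U}:\mathcal{X}\to 2^{\mathcal{X}}$. For $z\in\mathcal{X}$ let $\mathcal{U}^{-1}(z)=\{x\in\mathcal{X}: z\in\mathcal{U}(x)\}$, and let $\mathcal{U}^{-1}(\mathcal{U})$ denote the perturbation set $\mathcal{U}^{-1}(\mathcal{U})(x)=\bigcup_{z\in\mathcal{U}(x)}\mathcal{U}^{-1}(z)$. For a classifier $h$ and perturbation set $\mathcal{V}$, $\mathrm{Rob}_{\mathcal{V}}(h)=\{x\in\mathcal{X}:\forall z\in\mathcal{V}(x),\ h(z)=h(x)\}$. Selective classifier: for $h:\mathcal{X}\to\mathcal{Y}$, $G_h(z)=y$ if $\mathcal{U}^{-1}(z)\neq\emptyset$ and $h(\tilde x)=y$ for all $\tilde x\in\mathcal{U}^{-1}(z)$, and $G_h(z)=\perp$ otherwise. Cascade: $\mathrm{CAS}(h_1,\dots,h_T)(z)=G_{h_s}(z)$ where $s=\min\{t\le T: G_{h_t}(z)\neq\perp\}$; if no such $t$ exists, it outputs a fixed arbitrary label. All events are assumed measurable. *)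

(* Defs.v *)
From HB Require Import structures.
From mathcomp Require Import all_boot all_order all_algebra.
From mathcomp Require Import all_classical all_reals all_analysis.
Set Implicit Arguments. Unset Strict Implicit. Unset Printing Implicit Defensive.
Import Order.TTheory GRing.Theory Num.Theory.
Local Open Scope classical_set_scope.
Local Open Scope ring_scope.

Section Defs.
Context {X Y : Type}.

Definition Uinv (U : X -> set X) (z : X) : set X := [set x | U x z].

Definition UinvU (U : X -> set X) : X -> set X :=
  fun x => \bigcup_(z in U x) Uinv U z.

Definition Rob (V : X -> set X) (h : X -> Y) : set X :=
  [set x | forall z, V x z -> h z = h x].

(* Selective classifier G_h : None plays the role of \perp *)
Definition selective (U : X -> set X) (h : X -> Y) (z : X) : option Y :=
  match pselect (exists y : Y, Uinv U z !=set0 /\ forall x, Uinv U z x -> h x = y) with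
  | left P => Some (projT1 (cid P))
  | right _ => None
  end.

Fixpoint cascade_aux (U : X -> set X) (hs : seq (X -> Y)) (z : X) : option Y :=
  match hs with
  | [::] => None
  | h :: hs' => match selective U h z with
                | Some y => Some y
                | None => cascade_aux U hs' z
                end
  end.

(* CAS(h_1,...,h_T); y0 is the fixed arbitrary default label *)
Definition CAS (U : X -> set X) (h : nat -> X -> Y) (T : nat) (y0 : Y) (z : X) : Y :=
  odflt y0 (cascade_aux U [seq h t | t <- iota 1 T] z).

Definition Rset (U : X -> set X) (h : nat -> X -> Y) (t : nat) : set X :=
  Rob (UinvU U) (h t).

Definition Rbar (U : X -> set X) (h : nat -> X -> Y) (t : nat) : set X :=
  [set x | forall s, (1 <= s <= t)%N -> ~ Rset U h s x].
End Defs.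

Section Prob.
Context {d : measure_display} {X : measurableType d} {R : realType}.
Definition Pr (P : probability X R) (A : set X) : R := fine (P A).
Definition condPr (P : probability X R) (A B : set X) : R :=
  Pr P (A `&` B) / Pr P B.
End Prob.

(* Main.v *)
Require Import Defs.
From HB Require Import structures.
From mathcomp Require Import all_boot all_order all_algebra.
From mathcomp Require Import all_classical all_reals all_analysis.
Import Order.TTheory GRing.Theory Num.Theory.
Local Open Scope classical_set_scope.
Local Open Scope ring_scope.

From mathcomp Require Import ring lra.
Set Implicit Arguments. Unset Strict Implicit.

Section SetLemmas.
Context {X Y : Type} (U : X -> set X) (h : nat -> X -> Y).

Lemma Rbar0 : Rbar U h 0 = setT.
Proof. by apply/seteqP; split=> x //= _ s /andP[/leq_trans H /H]. Qed.

Lemma RbarS t : Rbar U h t.+1 = Rbar U h t `\` Rset U h t.+1.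
Proof.
apply/seteqP; split=> x /=.
- move=> H; split; first by move=> s /andP[s1 st]; apply: H; rewrite s1 /= (leq_trans st).
  by apply: H; rewrite /= leqnn.
- move=> [H1 H2] s /andP[s1]; rewrite leq_eqVlt => /orP[/eqP->//|].
  by rewrite ltnS => st; apply: H1; rewrite s1.
Qed.

Lemma sel_some x z k y : U x z -> selective U (h k) z = Some y -> y = h k x.
Proof.
move=> Uxz; rewrite /selective; case: pselect => // P [<-].
by case: (cid P) => /= y' [_ Hy]; rewrite Hy.
Qed.

Lemma sel_none x z k : U x z -> selective U (h k) z = None -> ~ Rset U h k x.
Proof.
move=> Uxz; rewrite /selective; case: pselect => // nP _ Hr; apply: nP.
exists (h k x); split; first by exists x.
move=> x' Ux'z; apply: Hr; exists z => //.
Qed.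

Lemma cas_aux x z k n : U x z -> (0 < k)%N -> Rbar U h k.-1 x ->
 (exists s, [/\ (k <= s < k + n)%N, Rbar U h s.-1 x &
     cascade_aux U [seq h t | t <- iota k n] z = Some (h s x)]) \/ Rbar U h (k + n).-1 x.
Proof.
move=> Uxz; elim: n k => [|n IH] k k0 Hk; first by right; rewrite addn0.
rewrite /= ; case E: (selective U (h k) z) => [y|].
  left; exists k; split => //; first by rewrite leqnn addnS ltnS leq_addr.
  by rewrite (sel_some Uxz E).
have Hk' : Rbar U h k x.
  by move: Hk; rewrite -{2}(prednK k0) RbarS => Hk; split => //; rewrite prednK //; exact: (sel_none Uxz E).
case: (IH k.+1 isT Hk') => [[s [/andP[s1 s2] Hs Hc]]|Hr].
  by left; exists s; split => //; rewrite (ltnW s1) /= -addSnnS.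
by right; rewrite -addSnnS.
Qed.
End SetLemmas.
Section PrLemmas.
Context {d : measure_display} {X : measurableType d} {R : realType}.
Variable D : probability X R.

Lemma Pr_fin A : measurable A -> D A \is a fin_num.
Proof. by move=> mA; apply: fin_num_measure. Qed.

Lemma Pr_ge0 A : 0 <= Pr D A.
Proof. exact/fine_ge0/measure_ge0. Qed.

Lemma Pr_le1 A : measurable A -> Pr D A <= 1.
Proof.
move=> mA; rewrite /Pr -lee_fin fineK ?Pr_fin //; exact: probability_le1.
Qed.

Lemma Pr_le A B : measurable A -> measurable B -> A `<=` B -> Pr D A <= Pr D B.
Proof.
move=> mA mB AB; rewrite /Pr -lee_fin !fineK ?Pr_fin //.
by apply: le_measure; rewrite ?inE.
Qed.

Lemma Pr_U2 A B : measurable A -> measurable B -> Pr D (A `|` B) <= Pr D A + Pr D B.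
Proof.
move=> mA mB; rewrite /Pr -lee_fin EFinD !fineK ?Pr_fin //; last exact: measurableU.
exact: measureU2.
Qed.

Lemma Pr_DI A B : measurable A -> measurable B -> Pr D A = Pr D (A `\` B) + Pr D (A `&` B).
Proof.
move=> mA mB; apply: EFin_inj; rewrite EFinD /Pr !fineK ?Pr_fin //;
  [exact: measureDI| exact: measurableI | exact: measurableD].
Qed.
End PrLemmas.

Theorem mainTheorem4 (d : measure_display) (X : measurableType d) (Y : Type)
  (R : realType) (U : X -> set X) (c : X -> Y) (D : probability X R)
  (beta eps' : R) (h : nat -> X -> Y) (T : nat) (y0 : Y) :
  0 < beta -> beta <= 1 -> 0 <= eps' ->
  (* all events are measurable *)
  (forall t, measurable (Rset U h t)) ->
  (forall t, measurable [set x | h t x <> c x]) ->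
  measurable [set x | exists2 z, U x z & CAS U h T y0 z <> c x] ->
  (forall t, (1 <= t <= T)%N -> 0 < Pr D (Rbar U h t.-1) ->
     beta <= condPr D (Rset U h t) (Rbar U h t.-1) /\
     condPr D [set x | h t x <> c x] (Rbar U h t.-1) <= eps') ->
  (forall t, (t <= T)%N -> Pr D (Rbar U h t) <= (1 - beta) ^+ t) /\
  Pr D [set x | exists2 z, U x z & CAS U h T y0 z <> c x]
    <= eps' / beta + (1 - beta) ^+ T.
Proof.
move=> b0 b1 e0 mR mB mE Hyp.
set q := 1 - beta.
have q0 : 0 <= q by rewrite /q subr_ge0.
have mRb t : measurable (Rbar U h t).
  elim: t => [|t IH]; first by rewrite Rbar0.
  by rewrite RbarS; apply: measurableD.
have P1 : forall t, (t <= T)%N -> Pr D (Rbar U h t) <= q ^+ t.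
  elim=> [|t IH] tT; first by rewrite expr0; apply: Pr_le1.
  have IH' := IH (ltnW tT).
  rewrite RbarS.
  have HDI := Pr_DI D (mRb t) (mR t.+1).
  have pge := Pr_ge0 D (Rbar U h t).
  have ige := Pr_ge0 D (Rbar U h t `&` Rset U h t.+1).
  case: (ltrP 0 (Pr D (Rbar U h t))) => pt.
    have [H1 _] := Hyp t.+1 tT pt.
    move: H1; rewrite /condPr ler_pdivlMr // setIC => H1.
    rewrite exprS.
    have : q * Pr D (Rbar U h t) <= q * q ^+ t by rewrite ler_wpM2l.
    rewrite /q in q0 * => ?; lra.
  have : Pr D (Rbar U h t) = 0 by apply/eqP; rewrite eq_le pt pge.
  move=> p0; have := exprn_ge0 t.+1 q0; lra.
split=> //.
set G := fun n => [set x | exists2 s, (1 <= s <= n)%N & Rbar U h s.-1 x /\ h s x <> c x].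
have G0 : G 0 = set0.
  by apply/seteqP; split=> x //= [s /andP[/leq_trans H /H]].
have GS n : G n.+1 = G n `|` (Rbar U h n `&` [set x | h n.+1 x <> c x]).
  apply/seteqP; split=> x /=.
  - move=> [s /andP[s1]]; rewrite leq_eqVlt => /orP[/eqP->|]; first by right.
    by rewrite ltnS => sn H; left; exists s => //; rewrite s1.
  - case=> [[s /andP[s1 sn] H]|[H1 H2]]; last by exists n.+1; [rewrite /= leqnn | split].
    by exists s => //; rewrite s1 (leq_trans sn).
have mG n : measurable (G n).
  by elim: n => [|n IH]; rewrite ?G0 // GS; apply: measurableU => //; apply: measurableI.
have PG : forall n, (n <= T)%N -> Pr D (G n) <= eps' * (1 - q ^+ n) / beta.
  elim=> [|n IH] nT; first by rewrite G0 expr0 subrr mulr0 mul0r /Pr measure0.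
  rewrite GS.
  apply: le_trans (Pr_U2 D (mG n) (measurableI _ _ (mRb n) (mB n.+1))) _.
  have IH' := IH (ltnW nT).
  have pn := P1 n (ltnW nT).
  have pge := Pr_ge0 D (Rbar U h n).
  have L : Pr D (Rbar U h n `&` [set x | h n.+1 x <> c x]) <= eps' * q ^+ n.
    case: (ltrP 0 (Pr D (Rbar U h n))) => pt.
      have [_ H2] := Hyp n.+1 nT pt.
      move: H2; rewrite /condPr ler_pdivrMr // setIC => H2.
      apply: (le_trans H2); by rewrite ler_wpM2l.
    apply: le_trans (Pr_le D (measurableI _ _ (mRb n) (mB n.+1)) (mRb n) (@subIsetl _ _ _)) _.
    apply: (le_trans pt); exact: mulr_ge0 (exprn_ge0 _ q0).
  have -> : eps' * (1 - q ^+ n.+1) / beta = eps' * (1 - q ^+ n) / beta + eps' * q ^+ n.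
    rewrite exprS /q; field; rewrite gt_eqF //.
  lra.
have sub : [set x | exists2 z, U x z & CAS U h T y0 z <> c x] `<=` Rbar U h T `|` G T.
  move=> x [z Uxz Hc].
  have := @cas_aux _ _ U h x z 1 T Uxz isT; rewrite Rbar0 => /(_ I).
  case=> [[s [/andP[s1 s2] Hs Hcas]]|Hr]; last by left.
  right; exists s; first by rewrite s1 -ltnS.
  by split=> //; move: Hc; rewrite /CAS Hcas.
apply: le_trans (Pr_le D mE (measurableU _ _ (mRb T) (mG T)) sub) _.
apply: le_trans (Pr_U2 D (mRb T) (mG T)) _.
have := P1 T (leqnn T); have := PG T (leqnn T).
have : eps' * (1 - q ^+ T) / beta <= eps' / beta.
  rewrite ler_pdivrMr // divfK ?gt_eqF //.
  have := exprn_ge0 T q0; nra.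
lra.
Qed.
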